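(* Consider the equation $$m_t+u_xu^{-3}m+(u^{-2}m)_x=0,\qquad m=u-u_{xx}.$$ For every wave speed $c>0$ and every parameter $b$ with $0<b<1$, this equation possesses smooth solitary travelling wave solutions $u=U(x-ct)$ (two of them, related by $U\leftrightarrow -U$), where $U$ is smooth, nowhere zero, $U(\xi)\to0$ as $|\xi|\to\infty$, and $U$ has a single peak with $$\max_\xi|U(\xi)|=\frac{b\sqrt{2-b^2}}{\sqrt c}.$$ These solutions satisfy the first-order ODE $U'^2=U^2\,\dfrac{b^2-1+\sqrt{1-cU^2}}{1+\sqrt{1-cU^2}}$.
   Context: A travelling wave of speed $c$ is a solution of the form $u(t,x)=U(\xi)$ with $\xi=x-ct$; for smooth $U$ the equation reduces to the third-order ODE $-c(U'-U''')+U'(U-U'')U^{-3}+((U-U'')U^{-2})'=0$. *)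

(* Defs.v *)
From Stdlib Require Import Reals.
From Coquelicot Require Import Coquelicot.
Open Scope R_scope.

Definition smooth (U : R -> R) : Prop :=
  forall (n : nat) (x : R), ex_derive_n U n x.

Definition tw_ode (c : R) (U : R -> R) (xi : R) : Prop :=
  - c * (Derive U xi - Derive_n U 3 xi)
  + Derive U xi * (U xi - Derive_n U 2 xi) / (U xi) ^ 3
  + Derive (fun y => (U y - Derive_n U 2 y) / (U y) ^ 2) xi = 0.

Definition first_order_ode (c b : R) (U : R -> R) (xi : R) : Prop :=
  (Derive U xi) ^ 2
  = (U xi) ^ 2 * (b ^ 2 - 1 + sqrt (1 - c * (U xi) ^ 2))
                / (1 + sqrt (1 - c * (U xi) ^ 2)).

Definition single_peak (U : R -> R) (M : R) : Prop :=
  exists xi0 : R,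
    Rabs (U xi0) = M /\
    (forall x, Rabs (U x) <= M) /\
    (forall x y, x < y -> y <= xi0 -> Rabs (U x) < Rabs (U y)) /\
    (forall x y, xi0 <= x -> x < y -> Rabs (U y) < Rabs (U x)).

Definition solitary_wave (c b : R) (U : R -> R) : Prop :=
  smooth U /\
  (forall xi, U xi <> 0) /\
  is_lim U p_infty 0 /\
  is_lim U m_infty 0 /\
  single_peak U (b * sqrt (2 - b ^ 2) / sqrt c) /\
  (forall xi, tw_ode c U xi) /\
  (forall xi, first_order_ode c b U xi).

(* Main.v *)
Require Import Defs.
From Stdlib Require Import Reals Ranalysis5 Lra Psatz ClassicalEpsilon FunctionalExtensionality.
From Coquelicot Require Import Coquelicot.
Open Scope R_scope.

Definition hh (T t : R) := /(2*T) * (ln (T+t) - ln (T-t)) - (ln (1+t) - ln (1-t)).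
Definition dh (T t : R) := (1 - 2*T^2 + t^2) / ((T^2 - t^2) * (1 - t^2)).

Lemma hh_deriv T t : 0 < T -> 2*T^2 < 1 -> -T < t < T -> is_derive (hh T) t (dh T t).
Proof.
  intros HT HT2 Ht. unfold hh, dh.
  assert (T < 1) by nra.
  auto_derive.
  - repeat split; lra.
  - field; repeat split; nra.
Qed.

Lemma hh_incr T x y : 0 < T -> 2*T^2 < 1 -> -T < x -> x < y -> y < T -> hh T x < hh T y.
Proof.
  intros HT HT2 H1 H2 H3.
  apply (incr_function (hh T) (Finite (-T)) (Finite T) (dh T)); simpl.
  - intros z Hz1 Hz2. simpl in *. apply hh_deriv; auto.
  - intros z Hz1 Hz2. simpl in *. unfold dh. assert (T<1) by nra.
    apply Rdiv_lt_0_compat; [nra|]. apply Rmult_lt_0_compat; nra.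
  - lra.
  - lra.
  - lra.
Qed.

Lemma hh_cont T t : 0 < T -> 2*T^2 < 1 -> -T < t < T -> continuity_pt (hh T) t.
Proof.
  intros. apply continuity_pt_filterlim. apply (ex_derive_continuous (hh T)).
  eexists. apply hh_deriv; auto.
Qed.

Lemma hh_odd T t : hh T (-t) = - hh T t.
Proof. unfold hh. replace (T + - t) with (T - t) by ring. replace (T - - t) with (T+t) by ring.
  replace (1 + - t) with (1 - t) by ring. replace (1 - - t) with (1+t) by ring. ring. Qed.

Lemma hh0 T : hh T 0 = 0.
Proof. unfold hh. rewrite !Rplus_0_r, !Rminus_0_r. ring. Qed.

Lemma hh_big T x : 0 < T -> 2*T^2 < 1 -> exists t, 0 <= t < T /\ Rabs x + 1 <= hh T t.
Proof.
  intros HT HT2. assert (T<1) by nra.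
  set (L0 := ln 2 - ln (1 - T)).
  set (y := 2*T*(Rabs x + Rabs L0 + 1)).
  assert (Hy : 0 <= y). { unfold y. pose proof (Rabs_pos x). pose proof (Rabs_pos L0). nra. }
  set (E := exp y).
  assert (HE : 1 <= E). { unfold E. rewrite <- exp_0. destruct Hy as [Hy|Hy]. left; apply exp_increasing; auto. rewrite Hy; lra. }
  exists (T*(E-1)/(E+1)). split.
  - split. apply Rmult_le_pos. nra. left; apply Rinv_0_lt_compat; lra.
    apply (Rmult_lt_reg_r (E+1)). lra. field_simplify; lra.
  - set (t := T*(E-1)/(E+1)).
    assert (Ht1 : 0 <= t < T). { unfold t. split. apply Rmult_le_pos. nra. left; apply Rinv_0_lt_compat; lra.
    apply (Rmult_lt_reg_r (E+1)). lra. field_simplify; lra. }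
    assert (HTt : T + t = (T - t) * E). { unfold t. field. lra. }
    unfold hh. rewrite HTt. rewrite ln_mult; [|lra|lra]. unfold E. rewrite ln_exp.
    assert (ln (1+t) <= ln 2) by (apply ln_le; lra).
    assert (ln (1-T) <= ln (1-t)) by (apply ln_le; lra).
    assert (L0 <= Rabs L0) by apply Rle_abs.
    replace (/ (2 * T) * (ln (T - t) + y - ln (T - t))) with (Rabs x + Rabs L0 + 1).
    2:{ unfold y. field. lra. }
    unfold L0 in *. lra.
Qed.

Lemma hh_surj T x : 0 < T -> 2*T^2 < 1 -> exists t, -T < t < T /\ hh T t = x.
Proof.
  intros HT HT2. destruct (hh_big T x HT HT2) as [t [Ht Hh]].
  pose proof (Rle_abs x). pose proof (Rabs_pos x).
  assert (Hx : - Rabs x <= x). { rewrite <- Rabs_Ropp. pose proof (Rle_abs (-x)). lra. }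
  assert (Ht0 : 0 < t). { destruct (proj1 Ht) as [|<-]; auto. rewrite hh0 in Hh. lra. }
  destruct (IVT_interv (fun z => hh T z - x) (-t) t) as [z [Hz1 Hz2]].
  - intros a Ha. apply continuity_pt_minus. apply hh_cont; auto; lra. apply continuity_pt_const. intros u v; auto.
  - lra.
  - rewrite hh_odd. lra.
  - lra.
  - exists z. split. lra. lra.
Qed.

Definition th (T x : R) : R := epsilon (inhabits 0) (fun t => -T < t < T /\ hh T t = x).

Lemma th_spec T x : 0 < T -> 2*T^2 < 1 -> -T < th T x < T /\ hh T (th T x) = x.
Proof.
  intros. unfold th. apply epsilon_spec. apply hh_surj; auto.
Qed.

Lemma th_incr T x y : 0 < T -> 2*T^2 < 1 -> x < y -> th T x < th T y.
Proof.
  intros HT HT2 Hxy. destruct (th_spec T x HT HT2) as [H1 H2]. destruct (th_spec T y HT HT2) as [H3 H4].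
  destruct (Rlt_or_le (th T x) (th T y)) as [|[Hl|He]]; auto.
  - pose proof (hh_incr T _ _ HT HT2 (proj1 H3) Hl (proj2 H1)). lra.
  - rewrite <- He in H2. lra.
Qed.

Lemma th_hh T t : 0 < T -> 2*T^2 < 1 -> -T < t < T -> th T (hh T t) = t.
Proof.
  intros HT HT2 Ht. destruct (th_spec T (hh T t) HT HT2) as [H1 H2].
  destruct (Rtotal_order (th T (hh T t)) t) as [Hl|[He|Hl]]; auto.
  - pose proof (hh_incr T _ _ HT HT2 (proj1 H1) Hl (proj2 Ht)). lra.
  - pose proof (hh_incr T _ _ HT HT2 (proj1 Ht) Hl (proj2 H1)). lra.
Qed.

Lemma th0 T : 0 < T -> 2*T^2 < 1 -> th T 0 = 0.
Proof. intros. rewrite <- (hh0 T) at 1. apply th_hh; auto; lra. Qed.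

Lemma th_cont T x : 0 < T -> 2*T^2 < 1 -> continuity_pt (th T) x.
Proof.
  intros HT HT2.
  destruct (th_spec T (x-1) HT HT2) as [H1 H2]. destruct (th_spec T (x+1) HT HT2) as [H3 H4].
  assert (Hl : th T (x-1) < th T (x+1)) by (apply th_incr; auto; lra).
  apply (continuity_pt_recip_interv (hh T) (th T) (th T (x-1)) (th T (x+1)) Hl).
  - intros u v Hu Huv Hv. apply hh_incr; auto; lra.
  - intros u _ _. unfold comp. apply th_spec; auto.
  - intros u Hu Hv. rewrite H2 in Hu. rewrite H4 in Hv. split.
    + destruct Hu as [Hu|Hu]. left; apply th_incr; auto. right; rewrite Hu; auto.
    + destruct Hv as [Hv|Hv]. left; apply th_incr; auto. right; rewrite Hv; auto.
  - intros u Hu. apply hh_cont; auto; lra.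
  - rewrite H2, H4. lra.
Qed.

Definition PP (T t : R) := (T^2 - t^2) * (1 - t^2) / (1 - 2*T^2 + t^2).

Lemma th_deriv T x : 0 < T -> 2*T^2 < 1 -> is_derive (th T) x (PP T (th T x)).
Proof.
  intros HT HT2.
  destruct (th_spec T (x-1) HT HT2) as [H1 H2]. destruct (th_spec T (x+1) HT HT2) as [H3 H4].
  destruct (th_spec T x HT HT2) as [H5 H6].
  assert (Prf : forall a, th T (x-1) <= a <= th T (x+1) -> derivable_pt (hh T) a).
  { intros a Ha. apply ex_derive_Reals_0. eexists. apply hh_deriv; auto; lra. }
  assert (Hinc : th T (x-1) <= th T x <= th T (x+1)).
  { split; left; apply th_incr; auto; lra. }
  pose proof (derivable_pt_lim_recip_interv (hh T) (th T) (x-1) (x+1) x Prf (th_cont T x HT HT2)) as D.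
  assert (Hd : derive_pt (hh T) (th T x) (Prf (th T x) Hinc) = dh T (th T x)).
  { apply derive_pt_eq_0. apply is_derive_Reals. apply hh_deriv; auto. }
  assert (T < 1) by nra.
  assert (Hpos : 0 < dh T (th T x)).
  { unfold dh. apply Rdiv_lt_0_compat; [nra|]. apply Rmult_lt_0_compat; nra. }
  specialize (D ltac:(lra) ltac:(lra) Hinc).
  rewrite Hd in D. apply is_derive_Reals.
  replace (PP T (th T x)) with (1 / dh T (th T x)).
  - apply D. intros u _. unfold comp. apply th_spec; auto. lra.
  - unfold PP, dh. set (t := th T x). fold t in H5. field. repeat split; nra.
Qed.

Inductive ex := Cs (r : R) | X0 | X1 | X2 | X3 | Ad (a b : ex) | Mu (a b : ex).

Fixpoint ev (e : ex) (s0 s1 s2 s3 : R) : R :=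
  match e with
  | Cs r => r | X0 => s0 | X1 => s1 | X2 => s2 | X3 => s3
  | Ad a b => ev a s0 s1 s2 s3 + ev b s0 s1 s2 s3
  | Mu a b => ev a s0 s1 s2 s3 * ev b s0 s1 s2 s3
  end.

Section Der.
Variables d0 d1 d2 d3 : ex.
Fixpoint der (e : ex) : ex :=
  match e with
  | Cs _ => Cs 0 | X0 => d0 | X1 => d1 | X2 => d2 | X3 => d3
  | Ad a b => Ad (der a) (der b)
  | Mu a b => Ad (Mu (der a) b) (Mu a (der b))
  end.

Variables f0 f1 f2 f3 : R -> R.
Hypothesis H0 : forall x, is_derive f0 x (ev d0 (f0 x) (f1 x) (f2 x) (f3 x)).
Hypothesis H1 : forall x, is_derive f1 x (ev d1 (f0 x) (f1 x) (f2 x) (f3 x)).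
Hypothesis H2 : forall x, is_derive f2 x (ev d2 (f0 x) (f1 x) (f2 x) (f3 x)).
Hypothesis H3 : forall x, is_derive f3 x (ev d3 (f0 x) (f1 x) (f2 x) (f3 x)).

Definition F (e : ex) := fun x => ev e (f0 x) (f1 x) (f2 x) (f3 x).

Lemma der_ok e x : is_derive (F e) x (F (der e) x).
Proof.
  induction e; unfold F; simpl.
  - apply (@is_derive_const R_AbsRing R_NormedModule).
  - apply H0. - apply H1. - apply H2. - apply H3.
  - apply (is_derive_plus (F e1) (F e2)); auto.
  - apply (is_derive_mult (F e1) (F e2)); auto. intros; apply Rmult_comm.
Qed.

Lemma Dn_ok n : forall e x, Derive_n (F e) n x = F (Nat.iter n der e) x /\ ex_derive_n (F e) n x.
Proof.
  induction n; intros e x.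
  - simpl. auto.
  - simpl. split.
    + rewrite (Derive_ext _ (F (Nat.iter n der e))). apply is_derive_unique. apply der_ok.
      intros t. apply (IHn e t).
    + apply (ex_derive_ext (F (Nat.iter n der e))). intros t. symmetry. apply (IHn e t).
      eexists. apply der_ok.
Qed.
End Der.

Definition Wf T x := / (1 - 2*T^2 + th T x ^ 2).
Definition Uf T k s x := s * k * sqrt (T^2 - th T x ^ 2) / (1 - th T x ^ 2).
Definition Vf T k s x := / Uf T k s x.

Definition dv0 T := Mu (Mu (Ad (Cs (T^2)) (Mu (Cs (-1)) (Mu X0 X0))) (Ad (Cs 1) (Mu (Cs (-1)) (Mu X0 X0)))) X1.
Definition dv1 T := Mu (Cs (-2)) (Mu X0 (Mu (dv0 T) (Mu X1 X1))).
Definition dv2 := Mu (Cs (-1)) (Mu X0 X2).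
Definition dv3 := Mu X0 X3.

Lemma scal_R (a b : R) : scal a b = a * b.
Proof. reflexivity. Qed.

Ltac toR := match goal with |- ?a = ?b => change (@eq R a b) end.

Lemma is_derive_eq (f : R -> R) x l l' : is_derive f x l -> l = l' -> is_derive f x l'.
Proof. intros H ->; auto. Qed.

Section Sys.
Variables T k s : R.
Hypothesis HT : 0 < T.
Hypothesis HT2 : 2*T^2 < 1.
Hypothesis Hk : 0 < k.
Hypothesis Hs : s <> 0.

Lemma th_bd x : -T < th T x < T.
Proof. apply th_spec; auto. Qed.

Lemma Uf_ne0 x : Uf T k s x <> 0.
Proof.
  unfold Uf. pose proof (th_bd x). set (t := th T x) in *.
  assert (T < 1) by nra.
  assert (0 < sqrt (T^2 - t^2)) by (apply sqrt_lt_R0; nra).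
  assert (0 < 1 - t^2) by nra.
  intro E. apply Rmult_integral in E. destruct E as [E|E].
  - apply Rmult_integral in E. destruct E as [E|E]. apply Rmult_integral in E. destruct E; [auto|lra]. lra.
  - apply Rinv_neq_0_compat in E; auto. lra.
Qed.

Lemma D0 x : is_derive (th T) x (ev (dv0 T) (th T x) (Wf T x) (Uf T k s x) (Vf T k s x)).
Proof.
  eapply is_derive_eq. apply th_deriv; auto.
  unfold PP, Wf; simpl. pose proof (th_bd x). set (t := th T x) in *.
  field. nra.
Qed.

Lemma D1 x : is_derive (Wf T) x (ev (dv1 T) (th T x) (Wf T x) (Uf T k s x) (Vf T k s x)).
Proof.
  pose proof (th_bd x).
  assert (Hg : is_derive (fun t => / (1 - 2*T^2 + t^2)) (th T x) (-(2 * th T x) / (1 - 2*T^2 + th T x^2)^2)).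
  { auto_derive. nra. field. nra. }
  pose proof (is_derive_comp _ _ x _ _ Hg (D0 x)) as Hc.
  unfold Wf. eapply is_derive_eq. apply Hc.
  simpl. unfold scal; simpl. unfold mult; simpl. unfold Wf. set (t := th T x) in *. field. nra.
Qed.

Lemma D2 x : is_derive (Uf T k s) x (ev dv2 (th T x) (Wf T x) (Uf T k s x) (Vf T k s x)).
Proof.
  pose proof (th_bd x). assert (T < 1) by nra.
  assert (Hg : is_derive (fun t => s * k * sqrt (T^2 - t^2) / (1 - t^2)) (th T x)
     (s * k * ((- (2 * th T x)) / (2 * sqrt (T^2 - th T x^2)) * (1 - th T x^2) + sqrt (T^2 - th T x^2) * (2 * th T x)) / (1 - th T x^2)^2)).
  { auto_derive. split. nra. split; [|auto]. nra.
    replace (T * (T * 1) + - (th T x * (th T x * 1))) with (T^2 - th T x^2) by ring.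
    set (t := th T x) in *. match goal with |- ?a = ?b => change (@eq R a b) end.
    field. split. apply Rgt_not_eq. apply sqrt_lt_R0. nra. nra. }
  pose proof (is_derive_comp _ _ x _ _ Hg (D0 x)) as Hc.
  unfold Uf. eapply is_derive_eq. apply Hc.
  toR. rewrite scal_R. cbn [ev dv0 dv2]. unfold Wf, Uf. set (t := th T x) in *.
  assert (Hq : 0 < sqrt (T^2 - t^2)) by (apply sqrt_lt_R0; nra).
  assert (Hq2 : sqrt (T^2 - t^2) * sqrt (T^2 - t^2) = T^2 - t^2) by (apply sqrt_sqrt; nra).
  set (q := sqrt (T^2 - t^2)) in *.
  assert (HTq : T^2 = q^2 + t^2) by nra.
  rewrite HTq. field. repeat split; nra.
Qed.

Lemma D3 x : is_derive (Vf T k s) x (ev dv3 (th T x) (Wf T x) (Uf T k s x) (Vf T k s x)).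
Proof.
  unfold Vf. eapply is_derive_eq. apply is_derive_inv. apply D2. apply Uf_ne0.
  toR. cbn [ev dv2 dv3]. pose proof (Uf_ne0 x). field. auto.
Qed.

End Sys.

Section E.
Variables T k s c : R.
Hypothesis HT : 0 < T.
Hypothesis HT2 : 2*T^2 < 1.
Hypothesis Hk : 0 < k.
Hypothesis Hs : s * s = 1.
Hypothesis Hc : 0 < c.
Hypothesis Hck : c * k^2 = 4 * (1 - T^2).

Lemma Hs0 : s <> 0.
Proof. intro E. rewrite E in Hs. lra. Qed.

Definition dd := der (dv0 T) (dv1 T) dv2 dv3.
Definition FF := F (th T) (Wf T) (Uf T k s) (Vf T k s).

Lemma dok e x : is_derive (FF e) x (FF (dd e) x).
Proof. apply der_ok; intros; [apply D0|apply D1|apply D2|apply D3]; auto; apply Hs0. Qed.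

Lemma dnok n e x : Derive_n (FF e) n x = FF (Nat.iter n dd e) x /\ ex_derive_n (FF e) n x.
Proof. apply Dn_ok; intros; [apply D0|apply D1|apply D2|apply D3]; auto; apply Hs0. Qed.

Lemma U_smooth : smooth (Uf T k s).
Proof. intros n x. exact (proj2 (dnok n X2 x)). Qed.

Lemma Usq x : Uf T k s x ^ 2 * (1 - th T x ^ 2)^2 = k^2 * (T^2 - th T x ^ 2).
Proof.
  unfold Uf. pose proof (th_bd T HT HT2 x). set (t := th T x) in *.
  assert (Hq2 : sqrt (T^2 - t^2) * sqrt (T^2 - t^2) = T^2 - t^2) by (apply sqrt_sqrt; nra).
  set (q := sqrt (T^2 - t^2)) in *. assert (1 - t^2 <> 0) by nra.
  field_simplify; auto. replace (s^2) with 1 by (rewrite <- Hs; ring).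
  replace (q^2) with (T^2-t^2) by (rewrite <- Hq2; ring). ring.
Qed.

Lemma U_tw x : tw_ode c (Uf T k s) x.
Proof.
  unfold tw_ode.
  rewrite (Derive_ext (fun y => (Uf T k s y - Derive_n (Uf T k s) 2 y) / (Uf T k s y)^2) (FF (Mu (Ad X2 (Mu (Cs (-1)) (Nat.iter 2 dd X2))) (Mu X3 X3)))).
  2:{ intros y. change (Derive_n (Uf T k s) 2 y) with (Derive_n (FF X2) 2 y). rewrite (proj1 (dnok 2 X2 y)). unfold FF, F. cbn [ev]. unfold Vf.
      pose proof (Uf_ne0 T k s HT HT2 Hk Hs0 y). field. auto. }
  rewrite (is_derive_unique _ _ _ (dok _ x)).
  change (Derive (Uf T k s) x) with (Derive_n (FF X2) 1 x).
  change (Derive_n (Uf T k s) 2 x) with (Derive_n (FF X2) 2 x).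
  change (Derive_n (Uf T k s) 3 x) with (Derive_n (FF X2) 3 x).
  rewrite (proj1 (dnok 1 X2 x)), (proj1 (dnok 2 X2 x)), (proj1 (dnok 3 X2 x)).
  unfold FF, F. unfold Vf, Wf. cbv [Nat.iter nat_rect dd der ev dv0 dv1 dv2 dv3].
  pose proof (Usq x). pose proof (Uf_ne0 T k s HT HT2 Hk Hs0 x). pose proof (th_bd T HT HT2 x).
  change (Uf T k s x) with (FF X2 x) in *.
  unfold Vf, Wf. set (u := FF X2 x) in *. set (t := th T x) in *.
  assert (Hcc : c = 4 * (1 - T^2) * (T^2 - t^2) / (u^2 * (1-t^2)^2)).
  { rewrite H. apply (Rmult_eq_reg_r (k^2)). field_simplify. rewrite Hck. ring.
    split; nra. nra. }
  rewrite Hcc. field. repeat split; try nra; auto.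
Qed.
End E.

Lemma gmono T u v : 0 < T -> 2*T^2 < 1 -> 0 <= v -> v < u -> u < T^2 ->
  (T^2-u)/(1-u)^2 < (T^2-v)/(1-v)^2.
Proof.
  intros. assert (T^2 < 1) by nra.
  apply (Rmult_lt_reg_r ((1-u)^2 * (1-v)^2)). nra.
  replace ((T ^ 2 - u) / (1 - u) ^ 2 * ((1 - u) ^ 2 * (1 - v) ^ 2)) with ((T^2-u)*(1-v)^2) by (field; nra).
  replace ((T ^ 2 - v) / (1 - v) ^ 2 * ((1 - u) ^ 2 * (1 - v) ^ 2)) with ((T^2-v)*(1-u)^2) by (field; nra).
  assert (0 < 1 - 2*T^2 + u*(T^2-v) + v*T^2) by nra.
  assert ((T^2-v)*(1-u)^2 - (T^2-u)*(1-v)^2 = (u-v)*(1 - 2*T^2 + u*(T^2-v) + v*T^2)) by ring.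
  nra.
Qed.

Section F.
Variables T k s c b : R.
Hypothesis HT : 0 < T.
Hypothesis HT2 : 2*T^2 < 1.
Hypothesis Hk : 0 < k.
Hypothesis Hs : s * s = 1.
Hypothesis Hc : 0 < c.
Hypothesis Hck : c * k^2 = 4 * (1 - T^2).
Hypothesis Hb : b^2 = 2 * T^2.

Lemma U_first x : first_order_ode c b (Uf T k s) x.
Proof.
  unfold first_order_ode.
  change (Derive (Uf T k s) x) with (Derive_n (FF T k s X2) 1 x).
  rewrite (proj1 (dnok T k s HT HT2 Hk Hs 1 X2 x)).
  unfold FF, F. cbv [Nat.iter nat_rect dd der ev dv0 dv1 dv2 dv3].
  pose proof (Usq T k s HT HT2 Hs x). pose proof (Uf_ne0 T k s HT HT2 Hk (Hs0 s Hs) x).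
  pose proof (th_bd T HT HT2 x).
  set (u := Uf T k s x) in *. set (t := th T x) in *.
  assert (Hcu : c * u^2 = 4 * (1 - T^2) * (T^2 - t^2) / (1-t^2)^2).
  { apply (Rmult_eq_reg_r (k^2 * (1-t^2)^2)). 2: { apply Rgt_not_eq. apply Rmult_lt_0_compat; apply pow_lt; nra. }
    replace (c * u ^ 2 * (k ^ 2 * (1 - t ^ 2) ^ 2)) with ((c * k^2) * (u^2 * (1-t^2)^2)) by ring.
    rewrite H, Hck. field. nra. }
  assert (Hsq : sqrt (1 - c * u^2) = (1 - 2*T^2 + t^2) / (1 - t^2)).
  { rewrite <- (sqrt_pow2 ((1 - 2*T^2 + t^2) / (1 - t^2))).
    f_equal. rewrite Hcu. field. nra.
    left. apply Rdiv_lt_0_compat; nra. }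
  rewrite Hsq, Hb. field. split; nra.
Qed.

Lemma absU_sq x : Rabs (Uf T k s x) ^ 2 = k^2 * ((T^2 - th T x^2) / (1 - th T x^2)^2).
Proof.
  pose proof (Usq T k s HT HT2 Hs x). pose proof (th_bd T HT HT2 x).
  rewrite pow2_abs.
  set (t := th T x) in *. apply (Rmult_eq_reg_r ((1-t^2)^2)). rewrite H. field. nra. nra.
Qed.

Lemma U_peak : single_peak (Uf T k s) (k * T).
Proof.
  assert (HsA : Rabs s = 1). { assert (Rabs s * Rabs s = 1) by (rewrite <- Rabs_mult, Hs; apply Rabs_R1). pose proof (Rabs_pos s). nra. }
  exists 0. split; [|split; [|split]].
  - unfold Uf. rewrite (th0 T HT HT2). replace (T^2 - 0^2) with (T^2) by ring.
    rewrite sqrt_pow2 by lra. replace (1 - 0^2) with 1 by ring.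
    unfold Rdiv; rewrite Rinv_1, Rmult_1_r, !Rabs_mult, HsA. rewrite (Rabs_pos_eq k), (Rabs_pos_eq T); lra.
  - intros x. pose proof (absU_sq x). pose proof (th_bd T HT HT2 x).
    pose proof (Rabs_pos (Uf T k s x)). set (t := th T x) in *. set (A := Rabs (Uf T k s x)) in *.
    assert (Hg : (T^2 - t^2)/(1-t^2)^2 <= T^2).
    { apply (Rmult_le_reg_r ((1-t^2)^2)). nra. unfold Rdiv. rewrite Rmult_assoc, Rinv_l, Rmult_1_r by nra. nra. }
    assert (A^2 <= (k*T)^2). { rewrite H. replace ((k*T)^2) with (k^2 * T^2) by ring. apply Rmult_le_compat_l; nra. }
    assert (0 < k*T) by (apply Rmult_lt_0_compat; lra).
    destruct (Rle_or_lt A (k*T)); auto. nra.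
  - intros x y Hxy Hy.
    pose proof (absU_sq x). pose proof (absU_sq y).
    pose proof (Rabs_pos (Uf T k s x)). pose proof (Rabs_pos (Uf T k s y)).
    pose proof (th_incr T x y HT HT2 Hxy).
    assert (th T y <= 0). { destruct Hy as [Hy|Hy]. rewrite <- (th0 T HT HT2). left; apply th_incr; auto. rewrite Hy; rewrite th0; auto; lra. }
    pose proof (th_bd T HT HT2 x). pose proof (th_bd T HT HT2 y).
    assert (Hg := gmono T (th T x ^ 2) (th T y ^ 2) HT HT2 ltac:(nra) ltac:(nra) ltac:(nra)).
    assert (Rabs (Uf T k s x) ^ 2 < Rabs (Uf T k s y) ^ 2). { rewrite H, H0. apply Rmult_lt_compat_l; nra. }
    nra.
  - intros x y Hx Hxy.
    pose proof (absU_sq x). pose proof (absU_sq y).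
    pose proof (Rabs_pos (Uf T k s x)). pose proof (Rabs_pos (Uf T k s y)).
    pose proof (th_incr T x y HT HT2 Hxy).
    assert (0 <= th T x). { destruct Hx as [Hx|Hx]. rewrite <- (th0 T HT HT2). left; apply th_incr; auto. rewrite <- Hx; rewrite th0; auto; lra. }
    pose proof (th_bd T HT HT2 x). pose proof (th_bd T HT HT2 y).
    assert (Hg := gmono T (th T y ^ 2) (th T x ^ 2) HT HT2 ltac:(nra) ltac:(nra) ltac:(nra)).
    assert (Rabs (Uf T k s y) ^ 2 < Rabs (Uf T k s x) ^ 2). { rewrite H, H0. apply Rmult_lt_compat_l; nra. }
    nra.
Qed.

Lemma U_small (eps : R) : 0 < eps -> exists d, 0 < d <= T /\
  forall x, (T - d)^2 < th T x ^ 2 -> Rabs (Uf T k s x) < eps.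
Proof.
  intros He. exists (Rmin T (eps^2 / (8 * k^2 * T + 1))).
  assert (Hd0 : 0 < eps^2 / (8 * k^2 * T + 1)) by (apply Rdiv_lt_0_compat; nra).
  assert (Hd1 := Rmin_l T (eps^2 / (8 * k^2 * T + 1))).
  assert (Hd2 := Rmin_r T (eps^2 / (8 * k^2 * T + 1))).
  set (d := Rmin T (eps^2 / (8 * k^2 * T + 1))) in *.
  assert (0 < d) by (unfold d; apply Rmin_pos; lra).
  split. lra.
  intros x Hx. pose proof (absU_sq x). pose proof (th_bd T HT HT2 x).
  pose proof (Rabs_pos (Uf T k s x)). set (t := th T x) in *. set (A := Rabs (Uf T k s x)) in *.
  assert (Hq : (T^2 - t^2)/(1-t^2)^2 <= 4 * (T^2 - t^2)).
  { apply (Rmult_le_reg_r ((1-t^2)^2)). nra. unfold Rdiv. rewrite Rmult_assoc, Rinv_l, Rmult_1_r by nra.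
    assert (Hq1 : 1/2 <= 1 - t^2) by nra. assert (Hq2 : 1/4 <= (1-t^2)^2) by nra. assert (0 <= T^2-t^2) by nra. nra. }
  assert (T^2 - t^2 < 2*T*d) by nra.
  assert (Hdd : d * (8 * k^2 * T + 1) <= eps^2).
  { apply (Rmult_le_reg_r (/ (8 * k^2 * T + 1))). apply Rinv_0_lt_compat; nra.
    rewrite Rmult_assoc, Rinv_r, Rmult_1_r by nra. exact Hd2. }
  assert (A^2 < eps^2).
  { rewrite H0. apply Rle_lt_trans with (k^2 * (4 * (T^2 - t^2))). apply Rmult_le_compat_l; nra. nra. }
  nra.
Qed.

Lemma U_lim_p : is_lim (Uf T k s) p_infty 0.
Proof.
  apply is_lim_spec. intros eps. destruct (U_small eps (cond_pos eps)) as [d [Hd Hs']].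
  exists (hh T (T - d)). intros x Hx.
  rewrite Rminus_0_r. apply Hs'.
  assert (th T (hh T (T-d)) < th T x) by (apply th_incr; auto).
  rewrite th_hh in H by (auto; lra). nra.
Qed.

Lemma U_lim_m : is_lim (Uf T k s) m_infty 0.
Proof.
  apply is_lim_spec. intros eps. destruct (U_small eps (cond_pos eps)) as [d [Hd Hs']].
  exists (hh T (-(T - d))). intros x Hx.
  rewrite Rminus_0_r. apply Hs'.
  assert (th T x < th T (hh T (-(T-d)))) by (apply th_incr; auto).
  rewrite th_hh in H by (auto; lra). nra.
Qed.

Lemma U_sol : solitary_wave c b (Uf T k s) = solitary_wave c b (Uf T k s).
Proof. reflexivity. Qed.
End F.

Lemma sol_gen T k s c b : 0 < T -> 2*T^2 < 1 -> 0 < k -> s * s = 1 -> 0 < c ->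
  c * k^2 = 4 * (1 - T^2) -> b^2 = 2 * T^2 -> k * T = b * sqrt (2 - b^2) / sqrt c ->
  solitary_wave c b (Uf T k s).
Proof.
  intros HT HT2 Hk Hs Hc Hck Hb HM.
  split; [|split; [|split; [|split; [|split; [|split]]]]].
  - apply (U_smooth T k s); auto.
  - intros x. apply Uf_ne0; auto. apply Hs0; auto.
  - apply (U_lim_p T k s c); auto.
  - apply (U_lim_m T k s c); auto.
  - rewrite <- HM. apply (U_peak T k s); auto.
  - intros x. apply (U_tw T k s c); auto.
  - intros x. apply (U_first T k s c b); auto.
Qed.

Theorem mainTheorem7 :
  forall c b : R, 0 < c -> 0 < b < 1 ->
  exists U : R -> R,
    solitary_wave c b U /\ solitary_wave c b (fun xi => - U xi).
Proof.
  intros c b Hc Hb.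
  assert (H2 : 0 < sqrt 2) by (apply sqrt_lt_R0; lra).
  assert (H22 : sqrt 2 * sqrt 2 = 2) by (apply sqrt_sqrt; lra).
  assert (Hbb : 0 < sqrt (2 - b^2)) by (apply sqrt_lt_R0; nra).
  assert (Hbb2 : sqrt (2 - b^2) * sqrt (2 - b^2) = 2 - b^2) by (apply sqrt_sqrt; nra).
  assert (Hcc : 0 < sqrt c) by (apply sqrt_lt_R0; lra).
  assert (Hcc2 : sqrt c * sqrt c = c) by (apply sqrt_sqrt; lra).
  set (T := b / sqrt 2). set (k := sqrt 2 * sqrt (2 - b^2) / sqrt c).
  assert (HT : 0 < T) by (apply Rdiv_lt_0_compat; lra).
  assert (HTb : 2 * T^2 = b^2) .
  { unfold T. replace (2 * (b / sqrt 2)^2) with (b^2 * 2 / (sqrt 2 * sqrt 2)) by (field; lra).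
    rewrite H22. field. }
  assert (HT2 : 2 * T^2 < 1) by nra.
  assert (Hk : 0 < k) by (unfold k; apply Rdiv_lt_0_compat; nra).
  assert (Hck : c * k^2 = 4 * (1 - T^2)).
  { unfold k. replace (c * (sqrt 2 * sqrt (2 - b ^ 2) / sqrt c) ^ 2) with
      ((sqrt 2 * sqrt 2) * (sqrt (2 - b^2) * sqrt (2 - b^2)) * (c / (sqrt c * sqrt c))) by (field; lra).
    rewrite H22, Hbb2, Hcc2. field_simplify; [|lra]. nra. }
  assert (HM : k * T = b * sqrt (2 - b^2) / sqrt c).
  { unfold k, T. replace (sqrt 2 * sqrt (2 - b ^ 2) / sqrt c * (b / sqrt 2)) with (b * sqrt (2 - b ^ 2) / sqrt c * (sqrt 2 / sqrt 2)) by (field; lra).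
    rewrite Rdiv_diag by lra. ring. }
  exists (Uf T k 1). split.
  - apply sol_gen; auto; lra.
  - replace (fun xi => - Uf T k 1 xi) with (Uf T k (-1)).
    + apply sol_gen; auto; lra.
    + apply functional_extensionality. intros x. unfold Uf. field. 
      pose proof (th_bd T HT HT2 x). nra.
Qed.
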